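(* Let $X$ and $Y$ be chains with $X$ bounded, let $F\colon X^*\to Y$ be a standard function, and let $a,b\in X$ with $a\leqslant b$. The following are equivalent. (i) (a) $F$ is preassociative and unarily quasi-range-idempotent; (b) there is a strictly increasing function $f\colon[a,b]\to Y$ with convex range such that $F_1(x)=f(\mathrm{med}(a,x,b))$ for all $x\in X$; (c) $F_2(x,x)=F_1(x)$ for every $x\in X$; (d) $F_2$ is nondecreasing in each argument; (e) the sets $\{F_2(x,z):x\in X\}$ and $\{F_2(z,x):x\in X\}$ are convex for every $z\in X$. (ii) (a) $F$ is preassociative and unarily quasi-range-idempotent; (b) there is a strictly increasing function $f\colon[a,b]\to Y$ with convex range such that $F_1(x)=f(\mathrm{med}(a,x,b))$ for all $x\in X$; (c) for every integer $n\geqslant 2$, $F_n(x,\ldots,x)=F_1(x)$ for every $x\in X$; (d) for every integer $n\geqslant 2$, $F_n$ is nondecreasing in each argument; (e) for every integer $n\geqslant 2$, every $0\leqslant i\leqslant n-1$, every $\mathbf{y}\in X^i$ and $\mathbf{z}\in X^{n-1-i}$, the set $\{F_n(\mathbf{y},x,\mathbf{z}):x\in X\}$ is convex. (iii) There exist $c,d\in[a,b]$ and a strictly increasing function $f\colon[a,b]\to Y$ with convex range such that for every $n\geqslant 1$, $$F_n(x_1,\ldots,x_n)=f\Big(\mathrm{med}\Big(a,\,(c\wedge x_1)\vee\mathrm{med}\Big(\bigwedge_{i=1}^n x_i,\,c\wedge d,\,\bigvee_{i=1}^n x_i\Big)\vee(d\wedge x_n),\,b\Big)\Big).$$ In this case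 $f=F_1|_{[a,b]}$.
   Context: $X^*=\bigcup_{n\geqslant 0}X^n$ is the set of finite tuples over $X$, $X^0=\{\varepsilon\}$ with $\varepsilon$ the empty tuple; $F(\mathbf{x},\mathbf{y})$ denotes $F$ applied to the concatenation, concatenation with $\varepsilon$ leaving tuples unchanged. $F_n=F|_{X^n}$, $F^{\flat}=F|_{X^*\setminus\{\varepsilon\}}$. $F$ is standard if $F(\mathbf{x})=F(\varepsilon)$ only for $\mathbf{x}=\varepsilon$. $F$ is preassociative if for all tuples $\mathbf{x},\mathbf{y},\mathbf{y}',\mathbf{z}$, $F(\mathbf{y})=F(\mathbf{y}')$ implies $F(\mathbf{x},\mathbf{y},\mathbf{z})=F(\mathbf{x},\mathbf{y}',\mathbf{z})$. $F$ is unarily quasi-range-idempotent if $\mathrm{ran}(F_1)=\mathrm{ran}(F^{\flat})$. In the chain $X$, $\wedge,\vee$ denote min and max, $[a,b]=\{x\in X: a\leqslant x\leqslant b\}$, and $\mathrm{med}(x,y,z)=(x\vee y)\wedge(y\vee z)\wedge(z\vee x)$. A subset $S$ of a chain is convex if $s,s'\in S$ and $s<t<s'$ imply $t\in S$. *)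

(* Defs.v *)
From HB Require Import structures.
From mathcomp Require Import all_boot all_order.
Set Implicit Arguments. Unset Strict Implicit. Unset Printing Implicit Defensive.
Import Order.TTheory.
Local Open Scope order_scope.

(* Tuples over X are represented by sequences [seq X]; F_n is F on sequences of size n. *)

Section Defs.
Context {dX dY : Order.disp_t} {X : orderType dX} {Y : orderType dY}.

Definition standard (F : seq X -> Y) : Prop :=
  forall s, F s = F [::] -> s = [::].

Definition preassociative (F : seq X -> Y) : Prop :=
  forall x y y' z : seq X, F y = F y' -> F (x ++ y ++ z) = F (x ++ y' ++ z).

Definition unarily_quasi_range_idempotent (F : seq X -> Y) : Prop :=
  forall t : Y, (exists x : X, F [:: x] = t) <-> (exists s, s <> [::] /\ F s = t).

Definition convex {d} {T : orderType d} (S : T -> Prop) : Prop :=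
  forall s s' t, S s -> S s' -> s < t -> t < s' -> S t.

Definition nondecreasing_n (F : seq X -> Y) (n : nat) : Prop :=
  forall (y z : seq X) (x x' : X), size y + (size z).+1 = n ->
    x <= x' -> F (y ++ x :: z) <= F (y ++ x' :: z).

Definition convex_sections_n (F : seq X -> Y) (n : nat) : Prop :=
  forall (y z : seq X), size y + (size z).+1 = n ->
    convex (fun t : Y => exists x : X, F (y ++ x :: z) = t).

(* f : [a,b] -> Y strictly increasing with convex range (f given as total map,
   only its values on [a,b] matter) *)
Definition strictly_increasing_on (a b : X) (f : X -> Y) : Prop :=
  forall x y, a <= x -> y <= b -> x < y -> f x < f y.

Definition convex_range_on (a b : X) (f : X -> Y) : Prop :=
  convex (fun t : Y => exists x, a <= x <= b /\ f x = t).

End Defs.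

Definition med {d} {T : orderType d} (x y z : T) : T :=
  Order.min (Order.min (Order.max x y) (Order.max y z)) (Order.max z x).

(* Main.v *)
Require Import Defs.
From HB Require Import structures.
From mathcomp Require Import all_boot all_order.
Import Order.TTheory.
Local Open Scope order_scope.

Ltac latom := lazymatch goal with
  | |- is_true (?x `&` ?y <= ?z) =>
      first [ apply: le_refl | assumption | (apply: leIxl; latom) | (apply: leIxr; latom) ]
  | _ => first [ apply: le_refl | assumption ] end.

Ltac lle := lazymatch goal with
  | |- is_true (?x <= ?y `&` ?z) => rewrite lexI; apply/andP; split; lle
  | |- is_true (?x `|` ?y <= ?z) => rewrite leUx; apply/andP; split; lle
  | |- is_true (?x <= ?y `|` ?z) =>
      first [ (apply: lexUl; lle) | (apply: lexUr; lle) | latom ]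
  | _ => latom end.

Ltac lat := rewrite ?(meetUl, meetUr); apply: le_anti; apply/andP; split; lle.

Section Lat.
Context {dT : Order.disp_t} {T : orderType dT}.
Implicit Types (a b c d e h l m M w x y z u v : T).

Lemma medE x y z : med x y z = ((x `|` y) `&` (y `|` z)) `&` (z `|` x).
Proof. by rewrite /med -!meetEtotal -!joinEtotal. Qed.

Lemma med_clamp a b x : a <= b -> med a x b = (x `&` b) `|` a.
Proof. move=> ab; rewrite medE; lat. Qed.

Lemma med_lo m e M : m <= M -> med m e M = m `|` (e `&` M).
Proof. move=> mM; rewrite medE; lat. Qed.

Lemma med_xx x e : med x e x = x.
Proof. rewrite medE; lat. Qed.

Lemma med_mono x y z x' y' z' : x <= x' -> y <= y' -> z <= z' -> med x y z <= med x' y' z'.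
Proof. by move=> *; rewrite !medE; apply: leI2; [apply: leI2|]; apply: leU2. Qed.
End Lat.

Section Clamp.
Context {dT : Order.disp_t} {T : tbOrderType dT}.
Definition is_clamp (phi : T -> T) := exists u v, u <= v /\ forall x, phi x = (x `&` v) `|` u.

Lemma clamp_const k : is_clamp (fun _ => k).
Proof. exists k, k; split=> // x; lat. Qed.

Lemma clamp_id : is_clamp id.
Proof. exists \bot, \top; split; first exact: le0x. by move=> x; rewrite meetx1 joinx0. Qed.

Lemma clamp_meet phi psi : is_clamp phi -> is_clamp psi -> is_clamp (fun x => phi x `&` psi x).
Proof.
move=> [u [v [uv hp]]] [u' [v' [uv' hq]]]; exists (u `&` u'), (v `&` v'); split.
  exact: leI2.
move=> x; rewrite hp hq; lat.
Qed.

Lemma clamp_join phi psi : is_clamp phi -> is_clamp psi -> is_clamp (fun x => phi x `|` psi x).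
Proof.
move=> [u [v [uv hp]]] [u' [v' [uv' hq]]]; exists (u `|` u'), (v `|` v'); split.
  exact: leU2.
move=> x; rewrite hp hq; lat.
Qed.

Lemma clamp_mono phi : is_clamp phi -> {homo phi : x y / x <= y}.
Proof. by move=> [u [v [_ hp]]] x y xy; rewrite !hp; apply: leU2 => //; apply: leI2. Qed.

Lemma clamp_fix phi x y t : is_clamp phi -> phi x <= t -> t <= phi y -> phi t = t.
Proof.
move=> [u [v [uv hp]]]; rewrite !hp => h1 h2.
have ut : u <= t by exact: le_trans (leUr _ _) h1.
have tv : t <= v by apply: le_trans h2 _; rewrite leUx uv andbT leIr.
by rewrite (meet_idPl tv) (join_idPl ut).
Qed.
End Clamp.


Section Main.
Context {dX dY : Order.disp_t} {X : tbOrderType dX} {Y : orderType dY}.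
Variables (a b : X) (hab : a <= b).

Definition pc (x : X) := med a x b.

Lemma pE x : pc x = (x `&` b) `|` a.
Proof. exact: med_clamp. Qed.

Lemma p_in x : a <= pc x <= b.
Proof. by rewrite pE leUr /= leUx hab andbT leIr. Qed.

Lemma p_id x : a <= x <= b -> pc x = x.
Proof. by case/andP=> ax xb; rewrite pE (meet_idPl xb) (join_idPl ax). Qed.

Lemma p_meet x y : pc (x `&` y) = pc x `&` pc y.
Proof. rewrite !pE; lat. Qed.

Lemma p_join x y : pc (x `|` y) = pc x `|` pc y.
Proof. rewrite !pE; lat. Qed.

Section F.
Variables (f : X -> Y) (finc : strictly_increasing_on a b f).

Lemma f_le x y : a <= x -> y <= b -> x <= y -> f x <= f y.
Proof.
move=> ax yb; rewrite le_eqVlt => /orP[/eqP->//|xy].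
exact/ltW/finc.
Qed.

Lemma f_refl x y : a <= x <= b -> a <= y <= b -> f x <= f y -> x <= y.
Proof.
move=> /andP[ax xb] /andP[ay yb] h; rewrite leNgt; apply/negP => yx.
by have := finc _ _ ay xb yx; rewrite ltNge h.
Qed.

Lemma f_inj x y : a <= x <= b -> a <= y <= b -> f x = f y -> x = y.
Proof.
move=> hx hy e; have h1 := f_refl _ _ hx hy; have h2 := f_refl _ _ hy hx.
by rewrite e lexx in h1 h2; apply: le_anti; rewrite h1 ?h2.
Qed.
End F.

Section C.
Variables (c d : X) (hc : a <= c <= b) (hd : a <= d <= b).

Definition SG (s : seq X) :=
  Order.max (Order.max (Order.min c (head a s))
     (med (\meet_(x <- s) x) (Order.min c d) (\join_(x <- s) x)))
   (Order.min d (last a s)).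
Definition Phi s := pc (SG s).
Definition Bop x y := ((c `&` x) `|` (x `&` y)) `|` (d `&` y).

Lemma Phi_in s : a <= Phi s <= b.
Proof. exact: p_in. Qed.

Lemma meet_head (s : seq X) : s != [::] -> \meet_(x <- s) x <= head a s.
Proof. by case: s => // x s _ /=; exact: (@meets_inf_seq _ _ _ (x :: s) predT (fun y => y) _ (mem_head _ _) isT). Qed.
Lemma join_head (s : seq X) : s != [::] -> head a s <= \join_(x <- s) x.
Proof. by case: s => // x s _ /=; exact: (@joins_sup_seq _ _ _ (x :: s) predT (fun y => y) _ (mem_head _ _) isT). Qed.
Lemma meet_last (s : seq X) : s != [::] -> \meet_(x <- s) x <= last a s.
Proof. by case: s => // x s _ /=; exact: (@meets_inf_seq _ _ _ (x :: s) predT (fun y => y) _ (mem_last _ _) isT). Qed.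
Lemma join_last (s : seq X) : s != [::] -> last a s <= \join_(x <- s) x.
Proof. by case: s => // x s _ /=; exact: (@joins_sup_seq _ _ _ (x :: s) predT (fun y => y) _ (mem_last _ _) isT). Qed.

Lemma SG_dnf s : s != [::] -> SG s =
  ((c `&` head a s) `|` ((\meet_(x <- s) x) `|` ((c `&` d) `&` \join_(x <- s) x)))
    `|` (d `&` last a s).
Proof.
move=> sn; rewrite /SG -!meetEtotal -!joinEtotal med_lo //.
exact: le_trans (meet_head _ sn) (join_head _ sn).
Qed.

Lemma Bop_idem x : Bop x x = x.
Proof. rewrite /Bop; lat. Qed.

Lemma Bop_assoc x y z : Bop (Bop x y) z = Bop x (Bop y z).
Proof. rewrite /Bop; lat. Qed.

Lemma Bop_mono x y x' y' : x <= x' -> y <= y' -> Bop x y <= Bop x' y'.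
Proof. by move=> h1 h2; rewrite /Bop; apply: leU2; [apply: leU2|]; apply: leI2. Qed.

Lemma p_B x y : pc (Bop x y) = Bop (pc x) (pc y).
Proof.
rewrite /Bop !(p_join, p_meet) (p_id _ hc) (p_id _ hd) //.
Qed.

Lemma Phi1 x : Phi [:: x] = pc x.
Proof. rewrite /Phi SG_dnf // big_seq1 big_seq1 /=; congr pc; lat. Qed.

Lemma Phi_rcons s w : s != [::] -> Phi (rcons s w) = Bop (Phi s) (pc w).
Proof.
move=> sn; rewrite /Phi -p_B; congr pc.
have hh : head a (rcons s w) = head a s by case: s sn.
have sn' : rcons s w != [::] by case: s sn hh.
rewrite SG_dnf // SG_dnf // hh last_rcons !big_rcons /=.
have mh := meet_head _ sn; have lM := join_last _ sn.
rewrite /Bop; lat.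
Qed.

Lemma Phi_cat s t : s != [::] -> t != [::] -> Phi (s ++ t) = Bop (Phi s) (Phi t).
Proof.
move=> sn; elim/last_ind: t => // t w IH _.
case: (eqVneq t [::]) => [->|tn].
  by rewrite cats1 Phi_rcons // Phi1.
have stn : s ++ t != [::].
  by move: sn; rewrite -!size_eq0 size_cat addn_eq0 => /negbTE ->.
by rewrite -rcons_cat Phi_rcons // IH // Bop_assoc -Phi_rcons.
Qed.

Lemma nseqSr n (x : X) : nseq n.+1 x = rcons (nseq n x) x.
Proof. by elim: n => //= n <-. Qed.

Lemma Phi_nseq n x : Phi (nseq n.+1 x) = pc x.
Proof.
elim: n => [|n IH]; first exact: Phi1.
by rewrite nseqSr Phi_rcons // IH Bop_idem.
Qed.

Lemma clamp_ext (phi psi : X -> X) : (forall x, phi x = psi x) -> is_clamp psi -> is_clamp phi.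
Proof. by move=> e [u [v [uv h]]]; exists u, v; split=> // x; rewrite e h. Qed.

Lemma clamp_p (phi : X -> X) : is_clamp phi -> is_clamp (fun x => pc (phi x)).
Proof.
move=> h; apply: (clamp_ext _ (fun x => (phi x `&` b) `|` a)) => [x|]; first exact: pE.
by apply: clamp_join (clamp_const _); apply: clamp_meet h (clamp_const _).
Qed.

Lemma clamp_Bop (phi psi : X -> X) : is_clamp phi -> is_clamp psi ->
  is_clamp (fun x => Bop (phi x) (psi x)).
Proof.
move=> h1 h2; rewrite /Bop.
apply: clamp_join; [apply: clamp_join|]; apply: clamp_meet => //; exact: clamp_const.
Qed.

Lemma Phi_sec (y z : seq X) : is_clamp (fun x => Phi (y ++ x :: z)).
Proof.
have hx : is_clamp (fun x => Phi (x :: z)).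
  case: (eqVneq z [::]) => [->|zn].
    by apply: (clamp_ext _ _ Phi1); apply: clamp_p clamp_id.
  apply: (clamp_ext _ (fun x => Bop (Phi [:: x]) (Phi z))) => [x|].
    exact: (Phi_cat [:: x] z isT zn).
  apply: clamp_Bop (clamp_const _).
  by apply: (clamp_ext _ _ Phi1); apply: clamp_p clamp_id.
case: (eqVneq y [::]) => [->//|yn].
apply: (clamp_ext _ (fun x => Bop (Phi y) (Phi (x :: z)))) => [x|].
  exact: (Phi_cat y (x :: z) yn isT).
exact: clamp_Bop (clamp_const _) hx.
Qed.

Lemma nn3 (x y z : seq X) : y != [::] -> x ++ y ++ z <> [::].
Proof. by move=> yn; case: x => [|? ?] //; case: y yn. Qed.

Lemma Phi_cat3 (x y y' z : seq X) : y != [::] -> y' != [::] -> Phi y = Phi y' ->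
  Phi (x ++ y ++ z) = Phi (x ++ y' ++ z).
Proof.
move=> yn y'n e.
have hw w : w != [::] -> w ++ z != [::] by case: w.
have e2 : Phi (y ++ z) = Phi (y' ++ z).
  case: (eqVneq z [::]) => [->|zn]; first by rewrite !cats0.
  by rewrite !Phi_cat // e.
case: (eqVneq x [::]) => [->//|xn].
by rewrite (Phi_cat x) ?hw // (Phi_cat x (y' ++ z)) ?hw // e2.
Qed.

Lemma iii_to_ii (F : seq X -> Y) (f : X -> Y) : standard F ->
  strictly_increasing_on a b f -> convex_range_on a b f ->
  (forall s, s <> [::] -> F s = f (Phi s)) ->
  [/\ preassociative F /\ unarily_quasi_range_idempotent F,
      (exists f : X -> Y, [/\ strictly_increasing_on a b f, convex_range_on a b f &
           forall x, F [:: x] = f (med a x b)]),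
      (forall n, (2 <= n)%N -> forall x, F (nseq n x) = F [:: x]),
      (forall n, (2 <= n)%N -> nondecreasing_n F n) &
      (forall n, (2 <= n)%N -> convex_sections_n F n)].
Proof.
move=> hF finc hcr hform.
have F1 x : F [:: x] = f (pc x) by rewrite hform // Phi1.
have nn y z x : y ++ x :: z <> [::] by case: y.
split.
- split.
    move=> x y y' z e.
    case: (eqVneq y [::]) => [y0|yn].
      have y'0 : y' = [::] by apply: hF; rewrite -e y0.
      by rewrite y0 y'0.
    case: (eqVneq y' [::]) => [y'0|y'n].
      have y0 : y = [::] by apply: hF; rewrite e y'0.
      by rewrite y0 eqxx in yn.
    have ePhi : Phi y = Phi y'.
      apply: (f_inj _ finc) (Phi_in _) (Phi_in _) _.
      by rewrite -!hform //; apply/eqP.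
    have n1 := nn3 x y z yn; have n2 := nn3 x y' z y'n.
    by rewrite (hform _ n1) (hform _ n2) (Phi_cat3 x y y' z yn y'n ePhi).
  move=> t; split.
    by move=> [x <-]; exists [:: x].
  move=> [s [sn <-]]; exists (Phi s).
  by rewrite F1 hform // p_id //; exact: Phi_in.
- by exists f; split.
- move=> [|[|n]] // _ x.
  by rewrite hform // Phi_nseq F1.
- move=> n _ y z x x' _ xx'.
  rewrite !hform //.
  have /andP[h1 _] := Phi_in (y ++ x :: z).
  have /andP[_ h2] := Phi_in (y ++ x' :: z).
  apply: (f_le _ finc) h1 h2 _.
  exact: (clamp_mono _ (Phi_sec y z) x x' xx').
- move=> n _ y z _ s s' t [x1 <-] [x2 <-] h1 h2.
  have Fphi x : F (y ++ x :: z) = f (Phi (y ++ x :: z)) by rewrite hform.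
  rewrite !Fphi in h1 h2.
  have [q [hq fq]] : exists q, a <= q <= b /\ f q = t.
    apply: (hcr _ _ t _ _ h1 h2).
      by exists (Phi (y ++ x1 :: z)); split => //; exact: Phi_in.
    by exists (Phi (y ++ x2 :: z)); split => //; exact: Phi_in.
  subst t.
  have l1 : Phi (y ++ x1 :: z) <= q.
    by apply: (f_refl _ finc) => //; [exact: Phi_in | exact: ltW].
  have l2 : q <= Phi (y ++ x2 :: z).
    by apply: (f_refl _ finc) => //; [exact: Phi_in | exact: ltW].
  exists q; rewrite Fphi.
  by rewrite (clamp_fix (fun x => Phi (y ++ x :: z)) _ _ _ (Phi_sec y z) l1 l2).
Qed.

End C.
Lemma i_to_iii (F : seq X -> Y) (f : X -> Y) :
  preassociative F -> unarily_quasi_range_idempotent F ->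
  strictly_increasing_on a b f -> (forall x, F [:: x] = f (med a x b)) ->
  (forall x, F [:: x; x] = F [:: x]) -> nondecreasing_n F 2 -> convex_sections_n F 2 ->
  exists c d, [/\ a <= c <= b, a <= d <= b &
     forall s, s <> [::] -> F s = f (Phi c d s)].
Proof.
move=> hpre hqri finc hF1 hc2 hd2 he2.
have finj := f_inj _ finc.
have Fq q : a <= q <= b -> F [:: q] = f q by move=> hq; rewrite hF1 -/(pc q) (p_id _ hq).
have ex x y : exists q, (a <= q <= b) && (F [:: x; y] == f q).
  have : exists s, s <> [::] /\ F s = F [:: x; y] by exists [:: x; y].
  move/hqri => [x0 hx0]; exists (pc x0); rewrite p_in /=; apply/eqP.
  by rewrite -hx0 hF1.
pose op x y := xchoose (ex x y).
have opP x y : (a <= op x y <= b) /\ F [:: x; y] = f (op x y).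
  by have /andP[h1 /eqP h2] := xchooseP (ex x y).
have opI x y := (opP x y).1.
have opF x y := (opP x y).2.
have pcpc x : pc (pc x) = pc x by apply: p_id; exact: p_in.
have Fp x : F [:: pc x] = F [:: x] by rewrite !hF1; congr f; exact: pcpc.
have op_pl x y : op x y = op (pc x) y.
  apply: finj (opI _ _) (opI _ _) _; rewrite -!opF.
  exact: (hpre [::] [:: x] [:: pc x] [:: y] (esym (Fp x))).
have op_pr x y : op x y = op x (pc y).
  apply: finj (opI _ _) (opI _ _) _; rewrite -!opF.
  exact: (hpre [:: x] [:: y] [:: pc y] [::] (esym (Fp y))).
have op_idem x : op x x = pc x.
  apply: finj (opI _ _) (p_in _) _; rewrite -opF hc2 hF1 //.
have Fop x y : F [:: op x y] = F [:: x; y] by rewrite Fq ?opI // opF.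
have op_assoc x y z : op (op x y) z = op x (op y z).
  apply: finj (opI _ _) (opI _ _) _; rewrite -!opF.
  have h1 := hpre [::] [:: x; y] [:: op x y] [:: z] (esym (Fop x y)).
  have h2 := hpre [:: x] [:: y; z] [:: op y z] [::] (esym (Fop y z)).
  by rewrite /= in h1 h2; rewrite -h1 h2.
have op_mono_l x x' y : x <= x' -> op x y <= op x' y.
  move=> h; apply: (f_refl _ finc) (opI _ _) (opI _ _) _; rewrite -!opF.
  exact: (hd2 [::] [:: y] x x' erefl h).
have op_mono_r x y y' : y <= y' -> op x y <= op x y'.
  move=> h; apply: (f_refl _ finc) (opI _ _) (opI _ _) _; rewrite -!opF.
  exact: (hd2 [:: x] [::] y y' erefl h).
have op_conv_l z x1 x2 t : op x1 z < t -> t < op x2 z -> exists x, op x z = t.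
  move=> h1 h2.
  have /andP[a1 _] := opI x1 z; have /andP[_ b2] := opI x2 z.
  have at' : a <= t by apply: le_trans a1 (ltW h1).
  have tb : t <= b by apply: le_trans (ltW h2) b2.
  have [x hx] := he2 [::] [:: z] erefl (f (op x1 z)) (f (op x2 z)) (f t)
     (ex_intro _ x1 (opF x1 z)) (ex_intro _ x2 (opF x2 z))
     (finc _ _ a1 tb h1) (finc _ _ at' b2 h2).
  exists x; apply: finj (opI _ _) _ _; first by rewrite at' tb.
  by rewrite -opF.
have op_conv_r z x1 x2 t : op z x1 < t -> t < op z x2 -> exists x, op z x = t.
  move=> h1 h2.
  have /andP[a1 _] := opI z x1; have /andP[_ b2] := opI z x2.
  have at' : a <= t by apply: le_trans a1 (ltW h1).
  have tb : t <= b by apply: le_trans (ltW h2) b2.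
  have [x hx] := he2 [:: z] [::] erefl (f (op z x1)) (f (op z x2)) (f t)
     (ex_intro _ x1 (opF z x1)) (ex_intro _ x2 (opF z x2))
     (finc _ _ a1 tb h1) (finc _ _ at' b2 h2).
  exists x; apply: finj (opI _ _) _ _; first by rewrite at' tb.
  by rewrite -opF.
have op_absl x y : op x (op x y) = op x y by rewrite -op_assoc op_idem -op_pl.
have op_absr x y : op (op x y) y = op x y by rewrite op_assoc op_idem -op_pr.
have pa : pc a = a by apply: p_id; rewrite lexx hab.
have pb : pc b = b by apply: p_id; rewrite lexx hab.
have pidI x : a <= x <= b -> op x x = x by move=> hx; rewrite op_idem p_id.
pose c := op b a; pose d := op a b.
have L1 y : a <= y <= b -> op a y = d `&` y.
  move=> hy; have /andP[ay yb] := hy.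
  apply: le_anti; apply/andP; split.
    rewrite lexI (op_mono_r _ _ _ yb) /=.
    by rewrite -{2}(pidI _ hy); apply: op_mono_l.
  case: (leP d y) => [dy|yd].
    rewrite /d -(op_absl a b); exact: op_mono_r.
  have [ay'|ya] := ltP a y; last first.
    have ey : y = a by apply/le_anti; rewrite ya ay.
    by rewrite ey op_idem pa.
  have h0 : op a a < y by rewrite op_idem pa.
  have [w hw] := op_conv_r a a b y h0 yd.
  by rewrite -hw op_absl.
have L2 x : a <= x <= b -> op x b = x `|` d.
  move=> hx; have /andP[ax xb] := hx.
  apply: le_anti; apply/andP; split; last first.
    rewrite leUx (op_mono_l _ _ _ ax) andbT.
    by rewrite -{1}(pidI _ hx); apply: op_mono_r.
  case: (leP x d) => [xd|dx].
    rewrite /d -(op_absr a b); exact: op_mono_l.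
  have [xb'|bx] := ltP x b; last first.
    have ex1 : x = b by apply/le_anti; rewrite bx xb.
    by rewrite ex1 op_idem pb.
  have h0 : x < op b b by rewrite op_idem pb.
  have [w hw] := op_conv_l b a b x dx h0.
  by rewrite -hw op_absr.
have L3 x : a <= x <= b -> op x a = c `&` x.
  move=> hx; have /andP[ax xb] := hx.
  apply: le_anti; apply/andP; split.
    rewrite lexI (op_mono_l _ _ _ xb) /=.
    by rewrite -{2}(pidI _ hx); apply: op_mono_r.
  case: (leP c x) => [cx|xc].
    rewrite /c -(op_absr b a); exact: op_mono_l.
  have [ax'|xa] := ltP a x; last first.
    have ex2 : x = a by apply/le_anti; rewrite xa ax.
    by rewrite ex2 op_idem pa.
  have h0 : op a a < x by rewrite op_idem pa.
  have [w hw] := op_conv_l a a b x h0 xc.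
  by rewrite -hw op_absr.
have L4 y : a <= y <= b -> op b y = c `|` y.
  move=> hy; have /andP[ay yb] := hy.
  apply: le_anti; apply/andP; split; last first.
    rewrite leUx (op_mono_r _ _ _ ay) /=.
    by rewrite -{1}(pidI _ hy); apply: op_mono_l.
  case: (leP y c) => [yc|cy].
    rewrite /c -(op_absl b a); exact: op_mono_r.
  have [yb'|by'] := ltP y b; last first.
    have ey : y = b by apply/le_anti; rewrite by' yb.
    by rewrite ey op_idem pb.
  have h0 : y < op b b by rewrite op_idem pb.
  have [w hw] := op_conv_r b a b y cy h0.
  by rewrite -hw op_absl.
have bin x y : a <= x <= b -> a <= y <= b -> op x y = Bop c d x y.
  move=> hx hy; have /andP[ax xb] := hx; have /andP[ay yb] := hy.
  case: (leP x y) => [xy|yx].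
    have lo : (d `&` y) `|` x <= op x y.
      rewrite leUx -(L1 _ hy) (op_mono_l _ _ _ ax) /=.
      by rewrite -{1}(pidI _ hx); apply: op_mono_r.
    have up : op x y <= (x `|` d) `&` y.
      rewrite lexI -(L2 _ hx) (op_mono_r _ _ _ yb) /=.
      by rewrite -{2}(pidI _ hy); apply: op_mono_l.
    have e1 : Bop c d x y <= (d `&` y) `|` x by rewrite /Bop; lle.
    have e2 : (x `|` d) `&` y <= Bop c d x y by rewrite /Bop meetUl; lle.
    apply: le_anti; rewrite (le_trans up e2) /=.
    exact: le_trans e1 lo.
  have lo : (c `&` x) `|` y <= op x y.
    rewrite leUx -(L3 _ hx) (op_mono_r _ _ _ ay) /=.
    by rewrite -{1}(pidI _ hy); apply: op_mono_l; apply: ltW.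
  have up : op x y <= (c `|` y) `&` x.
    rewrite lexI -(L4 _ hy) (op_mono_l _ _ _ xb) /=.
    by rewrite -{2}(pidI _ hx); apply: op_mono_r; apply: ltW.
  have e1 : Bop c d x y <= (c `&` x) `|` y by rewrite /Bop; lle.
  have e2 : (c `|` y) `&` x <= Bop c d x y by rewrite /Bop meetUl; lle.
  apply: le_anti; rewrite (le_trans up e2) /=.
  exact: le_trans e1 lo.
have hc : a <= c <= b by exact: opI.
have hd : a <= d <= b by exact: opI.
exists c, d; split => //.
elim/last_ind => // t w IH _.
case: (eqVneq t [::]) => [->|tn].
  by rewrite /= Phi1 hF1.
have tn' : t <> [::] by apply/eqP.
have e : F t = F [:: Phi c d t] by rewrite IH // Fq //; exact: Phi_in.
have := hpre [::] t [:: Phi c d t] [:: w] e.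
rewrite /= cats1 => ->.
rewrite opF op_pr bin ?p_in ?Phi_in //.
by rewrite Phi_rcons // p_id //; exact: Phi_in.
Qed.

End Main.
Theorem theorem5p8 (dX dY : Order.disp_t) (X : tbOrderType dX) (Y : orderType dY)
  (F : seq X -> Y) (hF : standard F) (a b : X) (hab : a <= b) :
  let cond_i :=
    [/\ preassociative F /\ unarily_quasi_range_idempotent F,
        (exists f : X -> Y, [/\ strictly_increasing_on a b f, convex_range_on a b f &
             forall x, F [:: x] = f (med a x b)]),
        (forall x, F [:: x; x] = F [:: x]),
        nondecreasing_n F 2 &
        convex_sections_n F 2] in
  let cond_ii :=
    [/\ preassociative F /\ unarily_quasi_range_idempotent F,
        (exists f : X -> Y, [/\ strictly_increasing_on a b f, convex_range_on a b f &
             forall x, F [:: x] = f (med a x b)]),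
        (forall n, (2 <= n)%N -> forall x, F (nseq n x) = F [:: x]),
        (forall n, (2 <= n)%N -> nondecreasing_n F n) &
        (forall n, (2 <= n)%N -> convex_sections_n F n)] in
  let formula_iii (c d : X) (f : X -> Y) :=
    forall s : seq X, s <> [::] ->
      F s = f (med a
                 (Order.max (Order.max (Order.min c (head a s))
                      (med (\meet_(x <- s) x) (Order.min c d) (\join_(x <- s) x)))
                    (Order.min d (last a s)))
                 b) in
  let cond_iii :=
    exists (c d : X) (f : X -> Y),
      [/\ a <= c <= b, a <= d <= b, strictly_increasing_on a b f,
          convex_range_on a b f & formula_iii c d f] in
  [/\ cond_i <-> cond_ii, cond_ii <-> cond_iii &
      forall (c d : X) (f : X -> Y), a <= c <= b -> a <= d <= b ->
        strictly_increasing_on a b f -> convex_range_on a b f ->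
        formula_iii c d f -> forall x, a <= x <= b -> f x = F [:: x]].
Proof.
move=> cond_i cond_ii formula_iii cond_iii.
have i_iii : cond_i -> cond_iii.
  case=> [[hpre hqri] [f [finc hcr hF1]] hc2 hd2 he2].
  have [c [d [hc hd hform]]] := i_to_iii a b hab F f hpre hqri finc hF1 hc2 hd2 he2.
  by exists c, d, f; split.
have iii_ii : cond_iii -> cond_ii.
  case=> c [d [f [hc hd finc hcr hform]]].
  exact: (iii_to_ii a b hab c d hc hd F f hF finc hcr hform).
have ii_i : cond_ii -> cond_i.
  case=> h1 h2 h3 h4 h5; split => //.
  - by move=> x; exact: (h3 2 isT x).
  - exact: h4 2 isT.
  - exact: h5 2 isT.
split.
- by split; [move/i_iii/iii_ii | exact: ii_i].
- by split; [move/ii_i/i_iii | exact: iii_ii].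
move=> c d f hc hd finc hcr hform x hx.
have H : F [:: x] = f (Phi a b c d [:: x]) by exact: hform.
by rewrite H Phi1 p_id.
Qed.
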